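(* Let $I=\{i_1,\dots,i_r\}\subset[n-1]$ with $0=i_0<i_1<\dots<i_r<i_{r+1}=n$, let $h\in\mathcal H_{I,n}$, and let $1\le k\le r+1$. Put $I'=I\cup\{i_{k-1}+1,\dots,i_k-1\}$ and let $h'\in\mathcal H_{I',n}$ be defined by $h'|_{I\cup\{n\}}=h$ and $h'(i)=h(i_k)$ for $i_{k-1}<i\le i_k$. Then $\mathsf{csf}_q(h')=[i_k-i_{k-1}]_q!\,\mathsf{csf}_q(h)$.
   Context: For $I\subset[n-1]$, $\mathcal H_{I,n}$ is the set of maps $h:I\cup\{n\}\to I\cup\{n\}$ with $h(i)\ge i$ and $h(i)\le h(j)$ for $i<j$ in $I$. For $h\in\mathcal H_{I,n}$ with $I=\{i_1<\dots<i_r\}$, $i_0=0$, $i_{r+1}=n$, the weighted graph of $h$ has vertex set $I\cup\{n\}$, edges $(i,j)$ for $i<j\le h(i)$, and weights $w_h(i_k)=i_k-i_{k-1}$. A proper coloring assigns to each vertex $i$ a subset $\gamma(i)\subset\mathbb N$ with $|\gamma(i)|=w_h(i)$ and $\gamma(i)\cap\gamma(j)=\emptyset$ for every edge $(i,j)$. $\mathsf{csf}_q(h)=\sum_{\gamma\text{ proper}}q^{\mathsf{asc}_h(\gamma)}x_\gamma$ with $x_\gamma=\prod_i\prod_{a\in\gamma(i)}x_a$ and $\mathsf{asc}_h(\gamma)=\sum_{(i,j)\text{ edge}}|\{(a,b)\in\gamma(i)\times\gamma(j):a<b\}|$. $[m]_q!=\prod_{s=1}^m(1+q+\dots+q^{s-1})$.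 *)

(* Defs.v *)
From HB Require Import structures.
From mathcomp Require Import all_boot all_order all_algebra.
From mathcomp Require Import mpoly.
Set Implicit Arguments. Unset Strict Implicit. Unset Printing Implicit Defensive.
Import Order.TTheory GRing.Theory Num.Theory.

Section CSF.
Variable n : nat.
Implicit Types (I : {set 'I_n.+1}) (h : 'I_n.+1 -> 'I_n.+1).

Definition Vset I : {set 'I_n.+1} := I :|: [set ord_max].

(* h \in H_{I,n} (h is a total function; only its values on I \cup {n} matter) *)
Definition inH I h : Prop :=
  [/\ forall i, i \in Vset I -> h i \in Vset I,
      forall i, i \in Vset I -> (i <= h i)%N &
      forall i j, i \in I -> j \in I -> (i < j)%N -> (h i <= h j)%N].

(* i_0 = 0, i_1 < ... < i_r the elements of I, i_{r+1} = n (default value) *)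
Definition iseq I (k : nat) : 'I_n.+1 :=
  nth ord_max (ord0 :: sort (fun x y : 'I_n.+1 => (x <= y)%N) (enum I)) k.

(* the predecessor of i among {0} \cup I *)
Definition prevI I (i : 'I_n.+1) : nat := (\max_(j in I | (j < i)%N) (j : nat))%N.

Definition weight I (i : 'I_n.+1) : nat := (i - prevI I i)%N.

Definition edge I h (i j : 'I_n.+1) : bool :=
  [&& i \in Vset I, j \in Vset I, (i < j)%N & (j <= h i)%N].

Variable N : nat. (* colours 'I_N represent {1, ..., N} *)

Definition proper I h (g : {ffun 'I_n.+1 -> {set 'I_N}}) : bool :=
  [&& [forall i, (i \notin Vset I) ==> (g i == set0)],
      [forall i, (i \in Vset I) ==> (#|g i| == weight I i)] &
      [forall i, forall j, edge I h i j ==> [disjoint g i & g j]]].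

Definition asc I h (g : {ffun 'I_n.+1 -> {set 'I_N}}) : nat :=
  (\sum_i \sum_(j | edge I h i j)
     #|[set p : 'I_N * 'I_N | [&& p.1 \in g i, p.2 \in g j & (p.1 < p.2)%N]]|)%N.

Definition xg (g : {ffun 'I_n.+1 -> {set 'I_N}}) : {mpoly {poly int}[N]} :=
  (\prod_(i : 'I_n.+1) \prod_(a in g i) 'X_a)%R.

(* csf_q(h) specialised to the variables x_1, ..., x_N (x_m = 0 for m > N) *)
Definition csf I h : {mpoly {poly int}[N]} :=
  (\sum_(g | proper I h g) ('X ^+ asc I h g)%:MP * xg g)%R.

End CSF.

Definition qfact (m : nat) : {poly int} :=
  (\prod_(s < m) \sum_(t < s.+1) 'X ^+ t)%R.

(* Main.v *)
Require Import Defs.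
From HB Require Import structures.
From mathcomp Require Import all_boot all_order all_algebra.
From mathcomp Require Import mpoly.
From mathcomp Require Import zify.
Import GRing.Theory.
Set Implicit Arguments. Unset Strict Implicit. Unset Printing Implicit Defensive.

Lemma properP n N (J : {set 'I_n.+1}) h (g : {ffun 'I_n.+1 -> {set 'I_N}}) :
  reflect [/\ forall i, i \notin Vset J -> g i = set0,
              forall i, i \in Vset J -> #|g i| = weight J i &
              forall i j, edge J h i j -> [disjoint g i & g j]]
          (Defs.proper J h g).
Proof.
rewrite /Defs.proper; apply: (iffP and3P) => [[/forallP H1 /forallP H2 /forallP H3]|[H1 H2 H3]]; split.
- by move=> i Hi; apply/eqP/(implyP (H1 i) Hi).
- by move=> i Hi; apply/eqP/(implyP (H2 i) Hi).
- by move=> i j Hij; move/forallP: (H3 i) => /(_ j) /implyP; apply.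
- by apply/forallP => i; apply/implyP => Hi; rewrite H1.
- by apply/forallP => i; apply/implyP => Hi; rewrite H2.
- by apply/forallP => i; apply/forallP => j; apply/implyP => Hij; apply: H3.
Qed.

Lemma csf_ext n N (J : {set 'I_n.+1}) h1 h2 :
  (forall x, x \in Vset J -> h1 x = h2 x) -> csf N J h1 = csf N J h2.
Proof.
move=> E.
have Ee : forall i j, edge J h1 i j = edge J h2 i j.
  move=> i j; rewrite /edge; case Hi: (i \in Vset J) => //=; by rewrite E.
rewrite /csf.
have Ep : forall g : {ffun 'I_n.+1 -> {set 'I_N}}, Defs.proper J h1 g = Defs.proper J h2 g.
  by move=> g; rewrite /Defs.proper; congr [&& _, _ & _]; apply: eq_forallb => i; apply: eq_forallb => j; rewrite Ee.
have Ea : forall g : {ffun 'I_n.+1 -> {set 'I_N}}, asc J h1 g = asc J h2 g.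
  by move=> g; rewrite /asc; apply: eq_bigr => i _; apply: eq_bigl => j; rewrite Ee.
by apply: eq_big => g; rewrite ?Ep // Ea.
Qed.

Lemma disjU (T : finType) (A B C : {set T}) :
  [disjoint A & C] -> [disjoint B & C] -> [disjoint A :|: B & C].
Proof. by rewrite -!setI_eq0 setIUl => /eqP-> /eqP->; rewrite setU0. Qed.

Lemma rank_sum N m (S : {set 'I_N}) : #|S| = m ->
  (\sum_(d in S) 'X^(\sum_(x in S) (x < d)%N) = \sum_(t < m) 'X^t :> {poly int})%R.
Proof.
elim: m S => [|m IH] S HS.
  by rewrite (cards0_eq HS) big_set0 big_ord0.
have [d0 Hd0] : exists d0, d0 \in S.
  by apply/set0Pn; apply/eqP => E; move: HS; rewrite E cards0.
case: (arg_maxnP (fun x : 'I_N => (x : nat)) Hd0) => mx Hmx Hmax.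
have {}Hmx : mx \in S := Hmx.
have HS0 : #|S :\ mx| = m by move: HS; rewrite (cardsD1 mx) Hmx add1n => -[].
rewrite (bigD1 mx) //= big_ord_recr /= addrC; congr (_ + _)%R.
  rewrite -(IH _ HS0); apply: eq_big => d; first by rewrite !inE andbC.
  move=> /andP[Hd Hdm]; congr ('X^_)%R.
  rewrite (bigD1 mx) //=.
  have -> : (mx < d)%N = false by apply/negbTE; rewrite -leqNgt; apply: Hmax.
  by rewrite add0n; apply: eq_bigl => x; rewrite !inE andbC.
congr ('X^_)%R; rewrite -HS0 -sum1_card.
rewrite (bigD1 mx) //= ltnn add0n; apply: eq_big => x; first by rewrite !inE andbC.
move=> /andP[Hx Hxm]; have := Hmax x Hx.
have : (x : nat) != mx by [].
move=> H1 H2; apply/eqP; rewrite eqb1; lia.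
Qed.

Section Split.
Variables (n N : nat) (J : {set 'I_n.+1}) (h : 'I_n.+1 -> 'I_n.+1) (u v : 'I_n.+1).
Hypotheses (Hv : v \in Vset J) (Hu : u \notin Vset J) (Huv : u.+1 = v :> nat)
  (Hprev : (prevI J v < u)%N) (Hh : forall x, x \in Vset J -> h x != u)
  (Hvh : (v <= h v)%N) (Hhu : h u = h v).

Local Notation J' := (u |: J).

Lemma VsetU : Vset J' = u |: Vset J.
Proof. by rewrite /Vset setUA. Qed.

Lemma uJ : u \notin J.
Proof. by move: Hu; rewrite /Vset inE negb_or => /andP[]. Qed.

Lemma uv : u != v.
Proof. apply/eqP => E; move: Huv; rewrite E; lia. Qed.

Lemma prevIU x : prevI J' x = if (u < x)%N then maxn u (prevI J x) else prevI J x.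
Proof.
rewrite /prevI big_mkcondr big_setU1 ?uJ //= -big_mkcondr.
case: ifP => _; last by rewrite max0n.
by [].
Qed.

Lemma vJ_max : v \in J \/ v = ord_max.
Proof. by move: Hv; rewrite /Vset !inE => /orP[->|/eqP->]; [left|right]. Qed.

Lemma weightU x : x \in Vset J -> x != v -> weight J' x = weight J x.
Proof.
move=> Hx Hxv; rewrite /weight prevIU; case: ifP => // Hux.
have Hvx : (v < x)%N.
  have : (x : nat) != v by [].
  have : x != u by apply/eqP => E; move: Hu; rewrite -E Hx.
  move/eqP => Hxu /eqP Hxv'; have Hxu' : (x : nat) <> u by move=> E; apply: Hxu; apply: val_inj.
  lia.
case: vJ_max => [HvJ|Hvm].
  have : (v <= prevI J x)%N by apply: (@leq_bigmax_cond _ (fun j => (j \in J) && (j < x)%N) (fun j : 'I_n.+1 => (j : nat)) v); rewrite HvJ.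
  by move=> H; rewrite (maxn_idPr _) //; lia.
by move: Hvx; rewrite Hvm /=; have := ltn_ord x; lia.
Qed.

Lemma weightUv : weight J' v = 1.
Proof. rewrite /weight prevIU -Huv ltnSn (maxn_idPl _) ?(ltnW Hprev) //; lia. Qed.

Lemma prevIuv : prevI J u = prevI J v.
Proof.
rewrite /prevI; apply: eq_bigl => j; case Hj: (j \in J) => //=.
rewrite -Huv ltnS [in RHS]leq_eqVlt; case E: (j == u :> nat); last by [].
by move: Hj; rewrite (val_inj (eqP E)) (negbTE uJ).
Qed.

Lemma weightUu : weight J' u = (weight J v).-1.
Proof. rewrite /weight prevIU ltnn prevIuv; lia. Qed.

Lemma weightJv : weight J v = (weight J' u).+1.
Proof. rewrite weightUu /weight; lia. Qed.


Lemma edge_xx J0 x : edge J0 h x x = false.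
Proof. by rewrite /edge ltnn !andbF. Qed.

Lemma edge_oo i j : i != u -> j != u -> edge J' h i j = edge J h i j.
Proof. by move=> Hi Hj; rewrite /edge VsetU !in_setU1 (negbTE Hi) (negbTE Hj). Qed.

Lemma Hh' x : x \in Vset J -> (u <= h x)%N = (v <= h x)%N.
Proof.
move=> Hx; have := Hh Hx; rewrite -val_eqE /= => /eqP H; apply/idP/idP; lia.
Qed.

Lemma edge_ou i : i != u -> i != v -> edge J' h i u = edge J h i v.
Proof.
move=> Hi Hiv; rewrite /edge VsetU !in_setU1 (negbTE Hi) eqxx Hv /=.
case Hx: (i \in Vset J) => //=; rewrite Hh' //.
move: Hi Hiv; rewrite -!val_eqE /= => /eqP H1 /eqP H2.
congr (_ && _); apply/idP/idP; lia.
Qed.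

Lemma edge_uo j : j != u -> j != v -> edge J' h u j = edge J h v j.
Proof.
move=> Hj Hjv; rewrite /edge VsetU !in_setU1 (negbTE Hj) eqxx Hv Hhu /=.
case Hx: (j \in Vset J) => //=.
move: Hj Hjv; rewrite -!val_eqE /= => /eqP H1 /eqP H2.
congr (_ && _); apply/idP/idP; lia.
Qed.

Lemma edge_uv : edge J' h u v.
Proof.
rewrite /edge VsetU !in_setU1 eqxx Hv orbT Hhu Hvh /=; lia.
Qed.

Lemma edge_vu : edge J' h v u = false.
Proof. rewrite /edge; apply/negbTE; rewrite !negb_and; apply/orP; right; apply/orP; right; apply/orP; left; lia. Qed.

Lemma edge_Jul j : edge J h u j = false.
Proof. by rewrite /edge (negbTE Hu). Qed.

Lemma edge_Jur i : edge J h i u = false.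
Proof. by rewrite /edge (negbTE Hu) andbF. Qed.

Definition cnt (A B : {set 'I_N}) :=
  #|[set p : 'I_N * 'I_N | [&& p.1 \in A, p.2 \in B & (p.1 < p.2)%N]]|.

Lemma cntE (A B : {set 'I_N}) : cnt A B = (\sum_(x in A) \sum_(y in B) (x < y)%N)%N.
Proof.
rewrite /cnt -sum1_card pair_big_dep /= big_mkcond [RHS]big_mkcond /=.
apply: eq_bigr => p _; rewrite inE; by case: (p.1 \in A); case: (p.2 \in B); case: (p.1 < p.2)%N.
Qed.

Lemma cntD1l (A B : {set 'I_N}) d : d \in A -> cnt A B = (cnt (A :\ d) B + cnt [set d] B)%N.
Proof.
move=> Hd; rewrite !cntE (bigD1 d) //= big_set1 addnC; congr (_ + _)%N.
by apply: eq_bigl => x; rewrite !inE andbC.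
Qed.

Lemma cntD1r (A B : {set 'I_N}) d : d \in A -> cnt B A = (cnt B (A :\ d) + cnt B [set d])%N.
Proof.
move=> Hd; rewrite !cntE -big_split /=; apply: eq_bigr => x _.
rewrite (bigD1 d) //= big_set1 addnC; congr (_ + _)%N.
by apply: eq_bigl => y; rewrite !inE andbC.
Qed.

Lemma cnt_rank (A : {set 'I_N}) d : d \in A -> cnt (A :\ d) [set d] = (\sum_(x in A) (x < d)%N)%N.
Proof.
move=> Hd; rewrite cntE [RHS](bigD1 d) //= ltnn add0n; apply: eq_big => x.
  by rewrite !inE andbC.
by move=> _; rewrite big_set1.
Qed.

Lemma split2 (F : 'I_n.+1 -> nat) :
  (\sum_i F i = F u + F v + \sum_(i | (i != u) && (i != v)) F i)%N.
Proof.
rewrite (bigD1 u) //= (bigD1 v) /=; last by rewrite eq_sym uv.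
rewrite addnA; congr (_ + _)%N; apply: eq_bigl => i; by rewrite andbC.
Qed.

Definition phi (g : {ffun 'I_n.+1 -> {set 'I_N}}) (d : 'I_N) : {ffun 'I_n.+1 -> {set 'I_N}} :=
  [ffun x => if x == u then g v :\ d else if x == v then [set d] else g x].

Lemma phiu (g : {ffun 'I_n.+1 -> {set 'I_N}}) d : phi g d u = g v :\ d. Proof. by rewrite ffunE eqxx. Qed.
Lemma phiv (g : {ffun 'I_n.+1 -> {set 'I_N}}) d : phi g d v = [set d]. Proof. by rewrite ffunE eq_sym (negbTE uv) eqxx. Qed.
Lemma phio (g : {ffun 'I_n.+1 -> {set 'I_N}}) d x : x != u -> x != v -> phi g d x = g x.
Proof. by move=> H1 H2; rewrite ffunE (negbTE H1) (negbTE H2). Qed.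

Definition C J0 h0 (g : {ffun 'I_n.+1 -> {set 'I_N}}) i j :=
  if edge J0 h0 i j then cnt (g i) (g j) else 0%N.

Definition R J0 h0 (g : {ffun 'I_n.+1 -> {set 'I_N}}) i :=
  (C J0 h0 g i u + C J0 h0 g i v + \sum_(j | (j != u) && (j != v)) C J0 h0 g i j)%N.

Lemma ascS J0 h0 (g : {ffun 'I_n.+1 -> {set 'I_N}}) :
  asc J0 h0 g = (R J0 h0 g u + R J0 h0 g v + \sum_(i | (i != u) && (i != v)) R J0 h0 g i)%N.
Proof.
rewrite /asc split2 /R; congr (_ + _ + _)%N; last apply: eq_bigr => i _.
- by rewrite big_mkcond split2.
- by rewrite big_mkcond split2.
- by rewrite big_mkcond split2.
Qed.

Lemma asc_phi (g : {ffun 'I_n.+1 -> {set 'I_N}}) d : d \in g v ->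
  asc J' h (phi g d) = (asc J h g + \sum_(x in g v) (x < d)%N)%N.
Proof.
move=> Hd; rewrite !ascS /R /C.
rewrite !edge_xx edge_vu edge_uv !edge_Jul !edge_Jur !phiu !phiv.
rewrite !add0n.
set S1 := (\sum_(j | _) (if edge J' h u j then _ else _))%N.
set S2 := (\sum_(j | _) (if edge J' h v j then _ else _))%N.
set S3 := (\sum_(j | _) (if edge J h v j then _ else _))%N.
set S0 := (\sum_(j | _) (if edge J h u j then _ else _))%N.
have -> : S0 = 0%N by rewrite /S0 big1 // => j _; rewrite edge_Jul.
set S4 := (\sum_(i | _) _)%N.
set S5 := (\sum_(i | _) _)%N.
have E12 : (S1 + S2 = S3)%N.
  rewrite /S1 /S2 /S3 -big_split /=; apply: eq_bigr => j /andP[Hju Hjv].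
  rewrite edge_uo // edge_oo //; last by rewrite eq_sym uv.
  case: ifP => _ //; by rewrite phio // [in RHS](cntD1l _ Hd).
have E45 : S4 = S5.
  rewrite /S4 /S5; apply: eq_bigr => i /andP[Hiu Hiv].
  rewrite edge_ou // edge_oo //; last by rewrite eq_sym uv.
  rewrite !phio // edge_Jur add0n.
  have -> : (\sum_(j | (j != u) && (j != v)) (if edge J' h i j then cnt (g i) (phi g d j) else 0) =
             \sum_(j | (j != u) && (j != v)) (if edge J h i j then cnt (g i) (g j) else 0))%N.
    apply: eq_bigr => j /andP[Hju Hjv]; by rewrite edge_oo // phio.
  case: ifP => _; last by [].
  by rewrite [in RHS](cntD1r _ Hd).
rewrite (cnt_rank Hd); lia.
Qed.

Lemma psplit2 (F : 'I_n.+1 -> {mpoly {poly int}[N]}) :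
  (\prod_i F i = F u * F v * \prod_(i | (i != u) && (i != v)) F i)%R.
Proof.
rewrite (bigD1 u) //= (bigD1 v) /=; last by rewrite eq_sym uv.
rewrite GRing.mulrA; congr (_ * _)%R; apply: eq_bigl => i; by rewrite andbC.
Qed.

Lemma xg_phi (g : {ffun 'I_n.+1 -> {set 'I_N}}) d : g u = set0 -> d \in g v ->
  xg (phi g d) = xg g.
Proof.
move=> Hgu Hd; rewrite /xg (psplit2 (fun i => \prod_(a in phi g d i) 'X_a)%R).
rewrite (psplit2 (fun i => \prod_(a in g i) 'X_a)%R) phiu phiv Hgu big_set0 big_set1.
rewrite [in RHS](bigD1 d) //=.
congr (_ * _)%R.
  rewrite !GRing.mul1r GRing.mulrC; congr (_ * _)%R; apply: eq_bigl => x; by rewrite !inE andbC.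
by apply: eq_bigr => x /andP[H1 H2]; rewrite phio.
Qed.
Definition collapse (g : {ffun 'I_n.+1 -> {set 'I_N}}) : {ffun 'I_n.+1 -> {set 'I_N}} :=
  [ffun x => if x == u then set0 else if x == v then g u :|: g v else g x].

Lemma vVJ' : v \in Vset J'. Proof. by rewrite VsetU in_setU1 Hv orbT. Qed.

Lemma phi_proper (g : {ffun 'I_n.+1 -> {set 'I_N}}) d :
  Defs.proper J h g -> d \in g v -> Defs.proper J' h (phi g d).
Proof.
move=> /properP[H1 H2 H3] Hd; apply/properP; split.
- move=> i; rewrite VsetU in_setU1 negb_or => /andP[Hiu Hi].
  have Hiv : i != v by apply/eqP => E; move: Hi; rewrite E Hv.
  by rewrite phio // H1.
- move=> i; case: (eqVneq i u) => [->|Hiu].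
    by rewrite phiu weightUu // -(H2 v Hv) (cardsD1 d (g v)) Hd.
  case: (eqVneq i v) => [->|Hiv].
    by rewrite phiv cards1 weightUv.
  rewrite VsetU in_setU1 (negbTE Hiu) /= => Hi.
  by rewrite phio // H2 // weightU.
- move=> i j Hij.
  case: (eqVneq i u) => [Eiu|Hiu]; case: (eqVneq j u) => [Eju|Hju].
  + by move: Hij; rewrite Eiu Eju edge_xx.
  + rewrite Eiu phiu; case: (eqVneq j v) => [->|Hjv].
      by rewrite phiv disjoint_sym disjoints1 !inE eqxx.
    rewrite phio //; apply: (disjointWl (B := g v)); first by apply: subsetDl.
    by apply: H3; move: Hij; rewrite Eiu edge_uo.
  + rewrite Eju phiu; case: (eqVneq i v) => [Eiv|Hiv].
      by move: Hij; rewrite Eiv Eju edge_vu.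
    rewrite phio //; apply: (disjointWr (B := g v)); first by apply: subsetDl.
    by apply: H3; move: Hij; rewrite Eju edge_ou.
  + rewrite edge_oo // in Hij.
    case: (eqVneq i v) => [Eiv|Hiv]; case: (eqVneq j v) => [Ejv|Hjv].
    * by move: Hij; rewrite Eiv Ejv edge_xx.
    * rewrite Eiv phiv phio //; apply: (disjointWl (B := g v)); first by rewrite sub1set.
      by apply: H3; move: Hij; rewrite Eiv.
    * rewrite Ejv phiv phio //; apply: (disjointWr (B := g v)); first by rewrite sub1set.
      by apply: H3; move: Hij; rewrite Ejv.
    * by rewrite !phio //; apply: H3.
Qed.

Lemma collapse_proper (g : {ffun 'I_n.+1 -> {set 'I_N}}) :
  Defs.proper J' h g ->
  [/\ Defs.proper J h (collapse g), exists2 d, g v = [set d] & d \notin g u &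
      forall d, g v = [set d] -> phi (collapse g) d = g].
Proof.
move=> /properP[H1 H2 H3].
have [d Hd] : exists d, g v = [set d].
  by apply/cards1P; rewrite H2 ?vVJ' // weightUv.
have Hdu : d \notin g u.
  have := H3 _ _ edge_uv; rewrite Hd disjoint_sym disjoints1; by [].
have Hvu : v != u by rewrite eq_sym uv.
split.
- apply/properP; split.
  + move=> i Hi; rewrite ffunE; case: (eqVneq i u) => // Hiu.
    have Hiv : i != v by apply/eqP => E; move: Hi; rewrite E Hv.
    by rewrite (negbTE Hiv) H1 // VsetU in_setU1 negb_or Hiu.
  + move=> i Hi; have Hiu : i != u by apply/eqP => E; move: Hi; rewrite E (negbTE Hu).
    rewrite ffunE (negbTE Hiu); case: (eqVneq i v) => [->|Hiv].
      rewrite Hd setUC cardsU1 Hdu H2 ?weightJv // VsetU in_setU1 eqxx //.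
    by rewrite H2 ?weightU // VsetU in_setU1 Hi orbT.
  + move=> i j Hij.
    have Hi : i \in Vset J by move: Hij; rewrite /edge => /and4P[].
    have Hj : j \in Vset J by move: Hij; rewrite /edge => /and4P[].
    have Hiu : i != u by apply/eqP => E; move: Hi; rewrite E (negbTE Hu).
    have Hju : j != u by apply/eqP => E; move: Hj; rewrite E (negbTE Hu).
    rewrite !ffunE (negbTE Hiu) (negbTE Hju).
    case: (eqVneq i v) => [Eiv|Hiv]; case: (eqVneq j v) => [Ejv|Hjv].
    * by move: Hij; rewrite Eiv Ejv edge_xx.
    * apply: disjU; apply: H3.
        by rewrite edge_uo // -Eiv.
      by rewrite edge_oo // -Eiv.
    * rewrite disjoint_sym; apply: disjU; rewrite disjoint_sym; apply: H3.
        by rewrite edge_ou // -Ejv.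
      by rewrite edge_oo // -Ejv.
    * by apply: H3; rewrite edge_oo.
- by exists d.
- move=> d' Hd'; apply/ffunP => x; rewrite !ffunE.
  case: (eqVneq x u) => [->|Hxu].
    move: Hd'; rewrite Hd => /setP /(_ d); rewrite !inE eqxx => /esym/eqP <-.
    by rewrite eqxx (negbTE Hvu) setUC setU1K.
  case: (eqVneq x v) => [->|Hxv] //.
Qed.

Lemma collapse_phi (g : {ffun 'I_n.+1 -> {set 'I_N}}) d :
  Defs.proper J h g -> d \in g v -> collapse (phi g d) = g.
Proof.
move=> /properP[H1 _ _] Hd; apply/ffunP => x; rewrite [LHS]ffunE.
case: (eqVneq x u) => [->|Hxu]; first by rewrite H1.
case: (eqVneq x v) => [->|Hxv]; last by rewrite phio.
by rewrite phiu phiv setUC setD1K.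
Qed.

Lemma csf_split_aux (d0 : 'I_N) :
  csf N J' h = ((\sum_(t < weight J v) 'X^t)%:MP * csf N J h)%R.
Proof.
rewrite /csf.
pose psi (g : {ffun 'I_n.+1 -> {set 'I_N}}) := (collapse g, odflt d0 [pick x in g v]).
have Hpick : forall (g : {ffun 'I_n.+1 -> {set 'I_N}}) d, g v = [set d] -> odflt d0 [pick x in g v] = d.
  move=> g d Hd; case: pickP => [x|]; rewrite Hd.
    by rewrite inE => /eqP.
  by move/(_ d); rewrite inE eqxx.
rewrite (reindex_onto (fun p => phi p.1 p.2) psi) /=; last first.
  move=> g Hg; case: (collapse_proper Hg) => _ [d Hd _] Hphi.
  by rewrite /psi /= (Hpick _ _ Hd); exact: Hphi.
rewrite GRing.mulr_sumr.
have -> : (\sum_(g | Defs.proper J h g)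
    ((\sum_(t < weight J v) 'X^t)%:MP * (('X ^+ asc J h g)%:MP * xg g)) =
  \sum_(g | Defs.proper J h g) \sum_(d | d \in g v)
    (('X ^+ asc J' h (phi g d))%:MP * xg (phi g d)))%R.
  apply: eq_bigr => g Hg.
  have Hc : #|g v| = weight J v by case/properP: Hg => _ H2 _; apply: H2.
  have Hgu : g u = set0 by case/properP: Hg => H1 _ _; apply: H1.
  rewrite -(rank_sum Hc) rmorph_sum GRing.mulr_suml; apply: eq_bigr => d Hd.
  by rewrite asc_phi // xg_phi // addnC GRing.exprD rmorphM GRing.mulrA.
rewrite pair_big_dep /=; apply: eq_bigl => -[g d] /=.
case Hg: (Defs.proper J h g); case Hd: (d \in g v) => /=.
- rewrite phi_proper //=; apply/eqP; rewrite /psi collapse_phi // (Hpick _ d) //.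
  by rewrite phiv.
- apply/negbTE/negP => /andP[HP /eqP Hpsi].
  have Ec : collapse (phi g d) = g by move: Hpsi; rewrite /psi => -[].
  move/negbT: Hd; apply/negP; apply/negPn.
  by rewrite -Ec ffunE eq_sym (negbTE uv) eqxx phiv !inE eqxx orbT.
- apply/negbTE/negP => /andP[HP /eqP Hpsi].
  have Ec : collapse (phi g d) = g by move: Hpsi; rewrite /psi => -[].
  case: (collapse_proper HP) => Hp _ _; move: Hp; by rewrite Ec Hg.
- apply/negbTE/negP => /andP[HP /eqP Hpsi].
  have Ec : collapse (phi g d) = g by move: Hpsi; rewrite /psi => -[].
  case: (collapse_proper HP) => Hp _ _; move: Hp; by rewrite Ec Hg.
Qed.

Lemma csf_split :
  csf N J' h = ((\sum_(t < weight J v) 'X^t)%:MP * csf N J h)%R.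
Proof.
case: (ltnP 0 N) => HN; first exact: (csf_split_aux (Ordinal HN)).
have E : forall (J0 : {set 'I_n.+1}) h0 x, x \in Vset J0 -> (0 < weight J0 x)%N -> csf N J0 h0 = 0%R.
  move=> J0 h0 x Hx Hw; rewrite /csf big_pred0 // => g; apply/negP => /properP[_ H2 _].
  have := max_card (mem (g x)); rewrite card_ord H2 //; lia.
rewrite (E _ _ v vVJ') ?weightUv // (E _ _ v Hv) ?GRing.mulr0 // weightJv //.
Qed.

End Split.

Lemma pairwise_lt m (s : seq 'I_m) :
  pairwise (fun x y : 'I_m => (x <= y)%N) s -> uniq s ->
  pairwise (fun x y : 'I_m => (x < y)%N) s.
Proof.
elim: s => //= x s IH /andP[Ha Hp] /andP[Hx Hu]; rewrite IH // andbT.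
apply/allP => y Hy; have := allP Ha y Hy.
have : x != y by apply/eqP => E; move: Hx; rewrite E Hy.
rewrite -val_eqE /= => /eqP; lia.
Qed.

Lemma iseq_facts n (I : {set 'I_n.+1}) k :
  I \subset [set i : 'I_n.+1 | (0 < i < n)%N] -> (1 <= k <= #|I|.+1)%N ->
  [/\ iseq I k \in Vset I, iseq I k.-1 = ord0 \/ iseq I k.-1 \in I &
      forall j, j \in I -> ~~ ((iseq I k.-1 < j)%N && (j < iseq I k)%N)].
Proof.
move=> HI /andP[Hk1 Hk2].
set s := sort (fun x y : 'I_n.+1 => (x <= y)%N) (enum I).
have Hs : size s = #|I| by rewrite size_sort cardE.
have Hms : forall x, (x \in s) = (x \in I) by move=> x; rewrite mem_sort mem_enum.
have Hsort : sorted (fun x y : 'I_n.+1 => (x <= y)%N) s.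
  by apply: sort_sorted => x y; apply: leq_total.
have Hpw : pairwise (fun x y : 'I_n.+1 => (x < y)%N) (ord0 :: s).
  rewrite /= pairwise_lt ?andbT; last by rewrite sort_uniq enum_uniq.
    apply/allP => x; rewrite Hms => Hx; have := subsetP HI x Hx; rewrite inE => /andP[]; by [].
  by rewrite -sorted_pairwise //; move=> x y z; apply: leq_trans.
have Hnth : forall i j, (i < size (ord0 :: s))%N -> (j < size (ord0 :: s))%N ->
    (nth ord_max (ord0 :: s) i < nth ord_max (ord0 :: s) j)%N -> (i < j)%N.
  move=> i j Hi Hj Hlt; case: (ltngtP i j) => // Hij.
    have := (elimT (pairwiseP ord_max) Hpw) j i Hj Hi Hij; lia.
  by move: Hlt; rewrite Hij ltnn.
rewrite /iseq -/s; split.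
- case: (ltnP k (size (ord0 :: s))) => Hk.
    case: k Hk1 Hk Hk2 => // k _ Hk _ /=; rewrite /Vset in_setU -Hms mem_nth //.
  by rewrite nth_default // /Vset in_setU in_set1 eqxx orbT.
- case: k Hk1 Hk2 => // -[|k] _ Hk2 /=; [by left | right].
  by rewrite -Hms mem_nth //; move: Hk2; rewrite -Hs.
- move=> j Hj; apply/negP => /andP[H1 H2].
  have Hjs : j \in s by rewrite Hms.
  set p := index j s.
  have Hp : (p < size s)%N by rewrite index_mem.
  have Ej : nth ord_max (ord0 :: s) p.+1 = j by rewrite /= nth_index.
  have Hkp : (k.-1 < p.+1)%N.
    apply: Hnth; rewrite ?Ej //=; lia.
  have Hpk : (p.+1 < k)%N.
    case: (ltnP k (size (ord0 :: s))) => Hk.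
      apply: Hnth; rewrite ?Ej //=; lia.
    move: Hk; rewrite /=; lia.
  lia.
Qed.

Unset Implicit Arguments. Set Strict Implicit.

Theorem lemma4p7 (n : nat) (I : {set 'I_n.+1}) (h h' : 'I_n.+1 -> 'I_n.+1)
  (k : nat) :
  I \subset [set i : 'I_n.+1 | (0 < i < n)%N] ->
  inH I h ->
  (1 <= k <= #|I|.+1)%N ->
  let a := iseq I k.-1 in
  let b := iseq I k in
  let I' := I :|: [set j : 'I_n.+1 | (a < j < b)%N] in
  (forall j, j \in Vset I -> h' j = h j) ->
  (forall j : 'I_n.+1, (a < j <= b)%N -> h' j = h b) ->
  forall N : nat,
    csf N I' h' = ((qfact (b - a))%:MP * csf N I h)%R.
Proof.
move=> HI HinH Hk a b I' Hh1 Hh2 N.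
case: (iseq_facts HI Hk); rewrite -/a -/b => Hb Ha Hgap.
case: HinH => Hmap Hge _.
have Hbn : (b <= n)%N by have := ltn_ord b; lia.
have Hhb : (b <= h b)%N := Hge b Hb.
have Hhb' : h b \in Vset I := Hmap b Hb.
have Hgap' : forall j, j \in I -> (j < b)%N -> (j <= a)%N.
  move=> j Hj Hjb; move: (Hgap j Hj); rewrite negb_and -!leqNgt => /orP[|]; lia.
case: (leqP b a) => Hab.
  have -> : I' = I.
    apply/setP => x; rewrite /I' !inE; case: (x \in I) => //=; apply/negP => /andP[]; lia.
  have -> : (b - a = 0)%N by lia.
  rewrite /qfact big_ord0 mpolyC1 mul1r; apply: csf_ext => x Hx; exact: Hh1.
set w := (b - a)%N.
pose It t := I :|: [set j : 'I_n.+1 | (b - t <= j < b)%N].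
have HVt : forall t x, (t < w)%N -> x \in Vset (It t) -> x \in Vset I \/ (a < x <= b)%N.
  move=> t x Ht; rewrite /Vset /It !inE => /orP[/orP[->|/andP[H1 H2]]|->]; try by left; rewrite ?orbT.
  right; lia.
have Hh'V : forall t x, (t < w)%N -> x \in Vset (It t) -> h' x \in Vset I.
  move=> t x Ht Hx; case: (HVt t x Ht Hx) => [HxV|Hx']; first by rewrite Hh1 // Hmap.
  by rewrite Hh2.
have claim : forall t, (t < w)%N ->
    ((qfact w)%:MP * csf N I h = (qfact (w - t))%:MP * csf N (It t) h')%R.
  elim=> [_|t IH Ht].
    have -> : It 0%N = I.
      apply/setP => x; rewrite /It !inE subn0; case: (x \in I) => //=; apply/negP => /andP[]; lia.
    rewrite subn0; congr (_ * _)%R; apply: csf_ext => x Hx; by rewrite Hh1.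
  rewrite IH; last by lia.
  set v : 'I_n.+1 := inord (b - t).
  set u : 'I_n.+1 := inord (b - t.+1).
  have Hv' : (v : nat) = (b - t)%N by rewrite /v inordK; lia.
  have Hu' : (u : nat) = (b - t.+1)%N by rewrite /u inordK; lia.
  have HuI : u \notin I.
    apply/negP => HuI; have := Hgap' u HuI; rewrite Hu'; lia.
  have Hum : u != ord_max by rewrite -val_eqE /= Hu'; apply/eqP; lia.
  have HuV : u \notin Vset I by rewrite /Vset !inE negb_or HuI.
  have Hv : v \in Vset (It t).
    case: (posnP t) => Ht0.
      have -> : v = b by apply: ord_inj; rewrite Hv' Ht0 subn0.
      move: Hb; rewrite /Vset /It !inE => /orP[->|->]; by rewrite ?orbT.
    rewrite /Vset /It !inE Hv'; apply/orP; left; apply/orP; right; apply/andP; split; lia.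
  have Hu : u \notin Vset (It t).
    rewrite /Vset /It !inE (negbTE HuI) (negbTE Hum) Hu' /= orbF; apply/negP => /andP[]; lia.
  have Huv : (u.+1 = v)%N by rewrite Hu' Hv'; lia.
  have Hpa : (prevI (It t) v <= a)%N.
    apply/bigmax_leqP => j /andP[Hj Hjv]; move: Hj; rewrite /It !inE => /orP[HjI|/andP[H1 H2]].
      apply: Hgap' => //; move: Hjv; rewrite Hv'; lia.
    move: Hjv; rewrite Hv'; lia.
  have Hpa' : (a <= prevI (It t) v)%N.
    case: Ha => [->|HaI]; first by [].
    apply: (@leq_bigmax_cond _ (fun j => (j \in It t) && (j < v)%N) (fun j : 'I_n.+1 => (j : nat)) a).
    rewrite /It !inE HaI /= Hv'; lia.
  have Hprev : (prevI (It t) v < u)%N by rewrite Hu'; lia.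
  have Hh : forall x, x \in Vset (It t) -> h' x != u.
    move=> x Hx; apply/eqP => E; move: HuV; rewrite -E (Hh'V t) //; lia.
  have Hvh : (v <= h' v)%N by rewrite Hh2; rewrite Hv'; lia.
  have Hhu : h' u = h' v by rewrite !Hh2 // ?Hu' ?Hv'; lia.
  have Ew : weight (It t) v = (w - t)%N by rewrite /weight; lia.
  have EIt : It t.+1 = u |: It t.
    apply/setP => x; rewrite /It !inE -val_eqE /= Hu'; case: (x \in I) => /=; first by rewrite orbT.
    apply/idP/idP; lia.
  rewrite EIt (csf_split N Hv Hu Huv Hprev Hh Hvh Hhu) Ew mulrA -rmorphM.
  have -> : (w - t = (w - t.+1).+1)%N by lia.
  by rewrite /qfact big_ord_recr.
have Hw1 : (w.-1 < w)%N by lia.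
have := claim w.-1 Hw1.
have -> : (w - w.-1 = 1)%N by lia.
have -> : It w.-1 = I'.
  apply/setP => x; rewrite /It /I' !inE; case: (x \in I) => //=; apply/idP/idP; lia.
rewrite (_ : qfact 1 = 1%R); last by rewrite /qfact big_ord1 big_ord1 expr0.
rewrite mpolyC1 mul1r => ->.
by [].
Qed.
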